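(* Let $a,b\in\mathbb R$ be such that the cubic $\Gamma_{a,b}:Y^2Z=X^3+aX^2Z+bXZ^2$ is non-singular, let $r_0,r_1\in\mathbb R\setminus\{0\}$ with $(r_0:r_1:1)\in\Gamma_{a,b}$, put $\alpha=r_0^3/r_1^2$, $\beta=a r_0^2/r_1^2$, $\gamma=b r_0/r_1^2$, and let $\Gamma_{\alpha,\beta,\gamma}$ be the curve $y^2x=\alpha+\beta x+\gamma x^2$ (so $\alpha+\beta+\gamma=1$ and $(1,1)\in\Gamma_{\alpha,\beta,\gamma}$), with conjugation $P\mapsto\bar P$ as described in the context. Let $A=(x_0,y_0)$ be an arbitrary but fixed point on $\Gamma_{\alpha,\beta,\gamma}$. For every point $P$ on $\Gamma_{\alpha,\beta,\gamma}$ different from $A$ and $\bar A$, let $g:=AP$ and $\bar g:=A\bar P$. Then the mapping $I_A:g\mapsto\bar g$ is a line involution (of the pencil of lines through $A$).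
   Context: On $\Gamma_{a,b}$ one uses the chord-tangent group law with neutral element the inflection point $\mathcal O=(0:1:0)$; the point $T=(0:0:1)$ has order 2, and the conjugate of a point $P\in\Gamma_{a,b}$ is $\bar P:=T+P$. The projective map $(X:Y:Z)\mapsto(x,y)=\big(r_0Z/X,\ r_0Y/(r_1X)\big)$ (in homogeneous form $(X:Y:Z)\mapsto(r_0Z:r_0Y/r_1:X)$) carries $\Gamma_{a,b}$ onto (the projective closure of) $\Gamma_{\alpha,\beta,\gamma}$ and $(r_0:r_1:1)$ to $(1,1)$; conjugation on $\Gamma_{\alpha,\beta,\gamma}$ is transported via this map. Equivalently, on $\Gamma_{\alpha,\beta,\gamma}$, $\bar P=P+T'$ in the group law with neutral element $(0:1:0)$ (the vertical point at infinity) and $T'=(1:0:0)$ (the horizontal point at infinity). A line involution of the pencil of lines through a point is a map from the pencil to itself which is an involution and preserves cross-ratios of lines. *)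

(* Defs.v *)
(* Projective plane P^2(R): points (and lines, via normal vectors) are
   represented by nonzero vectors of R^3 (triples), taken up to scaling. *)
From mathcomp Require Import all_boot all_order all_algebra.
From mathcomp Require Import reals.
Set Implicit Arguments. Unset Strict Implicit. Unset Printing Implicit Defensive.
Import Order.TTheory GRing.Theory Num.Theory.
Local Open Scope ring_scope.

Section Defs.
Variable R : realType.

Definition pt := (R * R * R)%type.

Definition px (u : pt) : R := u.1.1.
Definition py (u : pt) : R := u.1.2.
Definition pz (u : pt) : R := u.2.

Definition dot (u v : pt) : R := px u * px v + py u * py v + pz u * pz v.

Definition cross (u v : pt) : pt :=
  (py u * pz v - pz u * py v, pz u * px v - px u * pz v, px u * py v - py u * px v).

Definition det3 (u v w : pt) : R := dot (cross u v) w.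

Definition nonzero (u : pt) : Prop := u <> (0, 0, 0).

Definition peq (u v : pt) : Prop := nonzero u /\ nonzero v /\ cross u v = (0, 0, 0).

Definition Gab (a b : R) (P : pt) : R :=
  let: (X, Y, Z) := P in Y ^+ 2 * Z - X ^+ 3 - a * X ^+ 2 * Z - b * X * Z ^+ 2.
Definition Gab_X (a b : R) (P : pt) : R :=
  let: (X, Y, Z) := P in - (3%:R * X ^+ 2) - 2%:R * a * X * Z - b * Z ^+ 2.
Definition Gab_Y (a b : R) (P : pt) : R :=
  let: (X, Y, Z) := P in 2%:R * Y * Z.
Definition Gab_Z (a b : R) (P : pt) : R :=
  let: (X, Y, Z) := P in Y ^+ 2 - a * X ^+ 2 - 2%:R * b * X * Z.

Definition on_Gab (a b : R) (P : pt) : Prop := nonzero P /\ Gab a b P = 0.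

Definition nonsingular_ab (a b : R) : Prop :=
  forall P : pt, nonzero P ->
    ~ [/\ Gab a b P = 0, Gab_X a b P = 0, Gab_Y a b P = 0 & Gab_Z a b P = 0].

Definition alpha (r0 r1 : R) : R := r0 ^+ 3 / r1 ^+ 2.
Definition beta (a r0 r1 : R) : R := a * r0 ^+ 2 / r1 ^+ 2.
Definition gamma (b r0 r1 : R) : R := b * r0 / r1 ^+ 2.

Definition Fabg (al be ga : R) (P : pt) : R :=
  let: (X, Y, Z) := P in
  Y ^+ 2 * X - al * Z ^+ 3 - be * X * Z ^+ 2 - ga * X ^+ 2 * Z.

Definition on_curve (al be ga : R) (P : pt) : Prop := nonzero P /\ Fabg al be ga P = 0.

Definition Opt : pt := (0, 1, 0).
Definition Tpt : pt := (1, 0, 0).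

(* P, Q, R are the three intersection points (counted with multiplicity) of a
   line (with normal vector n) with the cubic: the restriction of the cubic
   form to the line is a constant times the product of the linear forms on
   the line vanishing at P, Q and R.  (X |-> det3 P X n is, on the plane
   n^perp, a linear form vanishing exactly at the multiples of P.) *)
Definition coll3 (al be ga : R) (P Q S : pt) : Prop :=
  exists n : pt, [/\ nonzero n, nonzero P, nonzero Q, nonzero S &
    [/\ dot n P = 0, dot n Q = 0, dot n S = 0 &
      exists c : R, forall X : pt, dot n X = 0 ->
        Fabg al be ga X = c * det3 P X n * det3 Q X n * det3 S X n]].

(* Chord-tangent law with neutral element O (an inflection point):
   P + Q = O * (P * Q), where U * V is the third intersection point.
   Conjugation: Pbar = P + T' = O * (P * T'). *)
Definition conj (al be ga : R) (P Pb : pt) : Prop :=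
  on_curve al be ga P /\
  exists S : pt, coll3 al be ga P Tpt S /\ coll3 al be ga Opt S Pb.

Definition in_pencil (A n : pt) : Prop := nonzero n /\ dot n A = 0.

(* cross-ratio of four lines of the pencil through A; for n, m in A^perp,
   det3 n m A is a (fixed, nonzero) multiple of the 2x2 determinant of n, m
   in a basis of A^perp *)
Definition cross_ratio (A n1 n2 n3 n4 : pt) : R :=
  (det3 n1 n3 A * det3 n2 n4 A) / (det3 n1 n4 A * det3 n2 n3 A).

Definition distinct_lines (n m : pt) : Prop := cross n m <> (0, 0, 0).

Definition line_involution (A : pt) (sigma : pt -> pt) : Prop :=
  [/\ (forall n, in_pencil A n -> in_pencil A (sigma n)),
      (forall n m, in_pencil A n -> in_pencil A m -> cross n m = (0, 0, 0) ->
          cross (sigma n) (sigma m) = (0, 0, 0)),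
      (forall n, in_pencil A n -> cross (sigma (sigma n)) n = (0, 0, 0)) &
      (forall n1 n2 n3 n4,
          in_pencil A n1 -> in_pencil A n2 -> in_pencil A n3 -> in_pencil A n4 ->
          distinct_lines n1 n2 -> distinct_lines n1 n3 -> distinct_lines n1 n4 ->
          distinct_lines n2 n3 -> distinct_lines n2 n4 -> distinct_lines n3 n4 ->
          cross_ratio A (sigma n1) (sigma n2) (sigma n3) (sigma n4)
            = cross_ratio A n1 n2 n3 n4)].

End Defs.

(* Main.v *)
Require Import Defs.
From mathcomp Require Import all_boot all_order all_algebra.
From mathcomp Require Import reals.
From mathcomp Require Import ring lra.
Import Order.TTheory GRing.Theory Num.Theory.
Local Open Scope ring_scope.

Section Aux.
Variable R : realType.

Lemma solve1 (u v a b : R) : a != 0 -> u * a - b * v = 0 -> u = b * v / a.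
Proof. move=> an h; apply: (mulIf an); rewrite mulfVK //; lra. Qed.

Lemma par_dot (u v w : pt R) : cross u v = (0,0,0) -> nonzero v ->
  dot w v = 0 -> dot w u = 0.
Proof.
case: u => [[u1 u2] u3]; case: v => [[v1 v2] v3]; case: w => [[w1 w2] w3].
rewrite /cross /dot /nonzero /px /py /pz /= => -[e1 e2 e3] nz hd.
have [v1z|v1n] := eqVneq v1 0.
  have [v2z|v2n] := eqVneq v2 0.
    have [v3z|v3n] := eqVneq v3 0.
      by exfalso; apply: nz; rewrite v1z v2z v3z.
    have hu1 : u1 = v1 * u3 / v3 by apply: solve1 => //; lra.
    have hu2 : u2 = v2 * u3 / v3 by apply: solve1 => //; lra.
    apply: (mulIf v3n); rewrite mul0r.
    have -> : (w1 * u1 + w2 * u2 + w3 * u3) * v3 = u3 * (w1 * v1 + w2 * v2 + w3 * v3) + w1 * v3 * (u1 - v1 * u3 / v3) + w2 * v3 * (u2 - v2 * u3 / v3).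
      by field.
    by rewrite hd -hu1 -hu2 !subrr !mulr0 !addr0.
  have hu1 : u1 = v1 * u2 / v2 by apply: solve1 => //; lra.
  have hu3 : u3 = v3 * u2 / v2 by apply: solve1 => //; lra.
  apply: (mulIf v2n); rewrite mul0r.
  have -> : (w1 * u1 + w2 * u2 + w3 * u3) * v2 = u2 * (w1 * v1 + w2 * v2 + w3 * v3) + w1 * v2 * (u1 - v1 * u2 / v2) + w3 * v2 * (u3 - v3 * u2 / v2).
    by field.
  by rewrite hd -hu1 -hu3 !subrr !mulr0 !addr0.
have hu2 : u2 = v2 * u1 / v1 by apply: solve1 => //; lra.
have hu3 : u3 = v3 * u1 / v1 by apply: solve1 => //; lra.
apply: (mulIf v1n); rewrite mul0r.
have -> : (w1 * u1 + w2 * u2 + w3 * u3) * v1 = u1 * (w1 * v1 + w2 * v2 + w3 * v3) + w2 * v1 * (u2 - v2 * u1 / v1) + w3 * v1 * (u3 - v3 * u1 / v1).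
  by field.
by rewrite hd -hu2 -hu3 !subrr !mulr0 !addr0.
Qed.

Lemma cross_sym (u v : pt R) : cross u v = (0,0,0) -> cross v u = (0,0,0).
Proof.
case: u => [[u1 u2] u3]; case: v => [[v1 v2] v3].
rewrite /cross /px /py /pz /= => -[e1 e2 e3].
congr (_,_,_); lra.
Qed.

Lemma par_trans (u v w : pt R) : cross u v = (0,0,0) -> cross v w = (0,0,0) ->
  nonzero v -> cross u w = (0,0,0).
Proof.
case: u => [[u1 u2] u3]; case: v => [[v1 v2] v3]; case: w => [[w1 w2] w3].
rewrite /cross /nonzero /px /py /pz /= => -[e1 e2 e3] [f1 f2 f3] nz.
have [v1z|v1n] := eqVneq v1 0.
  have [v2z|v2n] := eqVneq v2 0.
    have [v3z|v3n] := eqVneq v3 0.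
      by exfalso; apply: nz; rewrite v1z v2z v3z.
    have hu1 : u1 = v1 * u3 / v3 by apply: solve1 => //; lra.
    have hu2 : u2 = v2 * u3 / v3 by apply: solve1 => //; lra.
    have hw1 : w1 = v1 * w3 / v3 by apply: solve1 => //; lra.
    have hw2 : w2 = v2 * w3 / v3 by apply: solve1 => //; lra.
    rewrite hu1 hu2 hw1 hw2; congr (_,_,_); field; done.
  have hu1 : u1 = v1 * u2 / v2 by apply: solve1 => //; lra.
  have hu3 : u3 = v3 * u2 / v2 by apply: solve1 => //; lra.
  have hw1 : w1 = v1 * w2 / v2 by apply: solve1 => //; lra.
  have hw3 : w3 = v3 * w2 / v2 by apply: solve1 => //; lra.
  rewrite hu1 hu3 hw1 hw3; congr (_,_,_); field; done.
have hu2 : u2 = v2 * u1 / v1 by apply: solve1 => //; lra.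
have hu3 : u3 = v3 * u1 / v1 by apply: solve1 => //; lra.
have hw2 : w2 = v2 * w1 / v1 by apply: solve1 => //; lra.
have hw3 : w3 = v3 * w1 / v1 by apply: solve1 => //; lra.
rewrite hu2 hu3 hw2 hw3; congr (_,_,_); field; done.
Qed.

Lemma triple_prod (v A B : pt R) : dot v A = 0 -> dot v B = 0 ->
  cross v (cross A B) = (0,0,0).
Proof.
case: v => [[v1 v2] v3]; case: A => [[a1 a2] a3]; case: B => [[b1 b2] b3].
rewrite /cross /dot /px /py /pz /= => h1 h2.
congr (_,_,_).
- have -> : v2 * (a1 * b2 - a2 * b1) - v3 * (a3 * b1 - a1 * b3) = a1 * (v1 * b1 + v2 * b2 + v3 * b3) - b1 * (v1 * a1 + v2 * a2 + v3 * a3) by ring.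
  by rewrite h1 h2; ring.
- have -> : v3 * (a2 * b3 - a3 * b2) - v1 * (a1 * b2 - a2 * b1) = a2 * (v1 * b1 + v2 * b2 + v3 * b3) - b2 * (v1 * a1 + v2 * a2 + v3 * a3) by ring.
  by rewrite h1 h2; ring.
- have -> : v1 * (a3 * b1 - a1 * b3) - v2 * (a2 * b3 - a3 * b2) = a3 * (v1 * b1 + v2 * b2 + v3 * b3) - b3 * (v1 * a1 + v2 * a2 + v3 * a3) by ring.
  by rewrite h1 h2; ring.
Qed.

Arguments par_dot {u v w}.
Arguments par_trans {u v w}.
Arguments cross_sym {u v}.

Lemma L2 (al be ga S1 S2 S3 Q1 Q2 Q3 : R) : al != 0 ->
  coll3 al be ga (Opt R) (S1,S2,S3) (Q1,Q2,Q3) ->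
  cross (Q1,Q2,Q3) (S1,-S2,S3) = (0,0,0).
Proof.
move=> aln [[[m1 m2] m3] [nzm _ nzS nzQ [dO dS dQ [c Hc]]]].
move: dO dS dQ; rewrite /dot /Opt /px /py /pz /= => dO dS dQ.
have m2z : m2 = 0 by lra.
subst m2.
have dS' : m1 * S1 + m3 * S3 = 0 by lra.
have dQ' : m1 * Q1 + m3 * Q3 = 0 by lra.
rewrite /cross /px /py /pz /=.
have [m1z|m1n] := eqVneq m1 0.
  subst m1.
  have m3n : m3 != 0 by apply/eqP => m3z; apply: nzm; rewrite m3z.
  have S3z : S3 = 0 by apply: (mulfI m3n); lra.
  have Q3z : Q3 = 0 by apply: (mulfI m3n); lra.
  subst S3 Q3.
  have h1 := Hc (1, 1, 0).
  have hm := Hc (-1, 1, 0).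
  move: h1 hm; rewrite /Fabg /det3 /dot /cross /px /py /pz /=.
  move=> h1 hm; move: (h1 ltac:(ring)) (hm ltac:(ring)) => {h1 hm} h1 h2.
  have lin : c * m3^+3 * (S1 * Q2 + S2 * Q1) = 0 by lra.
  have cn : c * m3 ^+ 3 != 0.
    rewrite mulf_neq0 ?expf_neq0 //; apply/eqP => cz; move: h1; rewrite cz; lra.
  move: lin => /eqP; rewrite mulf_eq0 (negbTE cn) /= => /eqP lin.
  congr (_,_,_); lra.
have N0 : m1 ^+ 2 + m3 ^+ 2 != 0.
  by rewrite lt0r_neq0 // ltr_pwDl ?sqr_ge0 // exprn_even_gt0.
have h0 := Hc (-m3, 0, m1).
have h1 := Hc (-m3, 1, m1).
have h2 := Hc (-m3, -1, m1).
move: h0 h1 h2; rewrite /Fabg /det3 /dot /cross /px /py /pz /=.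
move=> h0 h1 h2; move: (h0 ltac:(ring)) (h1 ltac:(ring)) (h2 ltac:(ring)) => {h0 h1 h2} h0 h1 h2.
pose N := m1 ^+ 2 + m3 ^+ 2.
have lin : c*N*(N*S2*(m3*Q1 - m1*Q3) + N*Q2*(m3*S1 - m1*S3)) = 0 by rewrite /N; lra.
have cn : c != 0.
  apply/eqP => cz; move: h0 h1 h2; rewrite cz !mul0r => h0 h1 h2.
  have m3z : m3 = 0 by lra.
  move: h0; rewrite m3z => h0.
  have : al * m1 ^+ 3 = 0 by lra.
  by apply/eqP; rewrite mulf_neq0 // expf_neq0.
have key : c * N^+3 * (Q2*S3 + Q3*S2) = 0.
  have -> : c*N^+3*(Q2*S3+Q3*S2) = c*N^+2*(S2* m3*(m1*Q1 + m3*Q3) + Q2* m3*(m1*S1+m3*S3)) - m1 * (c*N*(N*S2*(m3*Q1 - m1*Q3) + N*Q2*(m3*S1 - m1*S3))) by rewrite /N; ring.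
  by rewrite lin dS' dQ'; ring.
have cNn : c * N ^+ 3 != 0 by rewrite mulf_neq0 ?expf_neq0.
move: key => /eqP; rewrite mulf_eq0 (negbTE cNn) /= => /eqP key.
congr (_,_,_).
- lra.
- apply: (mulfI m1n); rewrite mulr0.
  have -> : m1*(Q3 * S1 - Q1 * S3) = Q3 * (m1 * S1 + m3 * S3) - S3 * (m1 * Q1 + m3 * Q3) by ring.
  by rewrite dS' dQ'; ring.
- apply: (mulfI m1n); rewrite mulr0.
  have -> : m1*(Q1 * - S2 - Q2 * S1) = -S2*(m1 * Q1 + m3 * Q3) - Q2*(m1 * S1 + m3 * S3) + m3*(Q2 * S3 + Q3 * S2) by ring.
  by rewrite dS' dQ' key; ring.
Qed.
Arguments L2 {al be ga S1 S2 S3 Q1 Q2 Q3}.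

Lemma L1 (al be ga P1 P2 P3 S1 S2 S3 : R) : al != 0 -> ga != 0 ->
  coll3 al be ga (P1,P2,P3) (Tpt R) (S1,S2,S3) ->
  [\/ [/\ P3 != 0, S3 != 0, P2 * S3 = S2 * P3 & ga * P1 * S1 = al * P3 * S3],
      [/\ P1 = 0, P3 = 0, S2 = 0 & S3 = 0] |
      [/\ P2 = 0, P3 = 0, S1 = 0 & S3 = 0]].
Proof.
move=> aln gan [[[n1 n2] n3] [nzn nzP _ nzS [dP dT dS [c Hc]]]].
move: dP dT dS; rewrite /dot /Tpt /px /py /pz /= => dP dT dS.
have n1z : n1 = 0 by lra.
subst n1.
have dS' : n2 * S2 + n3 * S3 = 0 by lra.
have dP' : n2 * P2 + n3 * P3 = 0 by lra.
have [n2z|n2n] := eqVneq n2 0.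
  subst n2.
  have n3n : n3 != 0 by apply/eqP => n3z; apply: nzn; rewrite n3z.
  have S3z : S3 = 0 by apply: (mulfI n3n); lra.
  have P3z : P3 = 0 by apply: (mulfI n3n); lra.
  subst S3 P3.
  have h0 := Hc (0, 1, 0).
  have h1 := Hc (1, 1, 0).
  have h2 := Hc (-1, 1, 0).
  move: h0 h1 h2; rewrite /Fabg /det3 /dot /cross /px /py /pz /=.
  move=> h0 h1 h2; move: (h0 ltac:(ring)) (h1 ltac:(ring)) (h2 ltac:(ring)) => {h0 h1 h2} h0 h1 h2.
  have cn : c * n3 ^+ 3 != 0.
    rewrite mulf_neq0 ?expf_neq0 //; apply/eqP => cz; move: h1; rewrite cz; lra.
  have e1 : c * n3 ^+ 3 * (P1 * S1) = 0 by lra.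
  have e2 : c * n3 ^+ 3 * (P2 * S2) = 0 by lra.
  move: e1 e2 => /eqP; rewrite mulf_eq0 (negbTE cn) /= mulf_eq0 => e1 /eqP.
  rewrite mulf_eq0 (negbTE cn) /= mulf_eq0 => e2.
  have [P1z|P1n] := eqVneq P1 0.
    have P2n : P2 != 0 by apply/eqP => P2z; apply: nzP; rewrite P1z P2z.
    move: e2; rewrite (negbTE P2n) /= => /eqP S2z.
    by apply: Or32.
  move: e1; rewrite (negbTE P1n) /= => /eqP S1z.
  have S2n : S2 != 0 by apply/eqP => S2z; apply: nzS; rewrite S1z S2z.
  move: e2; rewrite (negbTE S2n) orbF => /eqP P2z.
  by apply: Or33.
apply: Or31.
have h0 := Hc (0, -n3, n2).
have h1 := Hc (1, -n3, n2).
have h2 := Hc (-1, -n3, n2).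
move: h0 h1 h2; rewrite /Fabg /det3 /dot /cross /px /py /pz /=.
move=> h0 h1 h2; move: (h0 ltac:(ring)) (h1 ltac:(ring)) (h2 ltac:(ring)) => {h0 h1 h2} h0 h1 h2.
pose N := n2 ^+ 2 + n3 ^+ 2.
have E2 : ga * n2 = c * N * (n2 * P3 - n3 * P2) * (n2 * S3 - n3 * S2) by rewrite /N; lra.
have E0 : al * n2 ^+ 3 = c * N ^+ 3 * P1 * S1 by rewrite /N; lra.
have hP2 : P2 = (- n3) * P3 / n2 by apply: solve1 => //; lra.
have hS2 : S2 = (- n3) * S3 / n2 by apply: solve1 => //; lra.
have E3 : ga * n2 ^+ 3 = c * N ^+ 3 * P3 * S3.
  rewrite (_ : ga * n2 ^+ 3 = n2 ^+ 2 * (ga * n2)); last by ring.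
  by rewrite E2 hP2 hS2 /N; field.
have gn : ga * n2 ^+ 3 != 0 by rewrite mulf_neq0 // expf_neq0.
have P3n : P3 != 0 by apply/eqP => P30; move: gn; rewrite E3 P30 ?mulr0 ?mul0r eqxx.
have S3n : S3 != 0 by apply/eqP => S30; move: gn; rewrite E3 S30 ?mulr0 ?mul0r eqxx.
have cNn : c * N ^+ 3 != 0 by apply/eqP => cz; move: gn; rewrite E3 cz !mul0r eqxx.
split => //.
  by rewrite hP2 hS2; field.
apply: (mulfI cNn).
have := congr1 (fun t => ga * t) E0; have := congr1 (fun t => al * t) E3.
move=> /= h3 h4; lra.
Qed.
Arguments L1 {al be ga P1 P2 P3 S1 S2 S3}.

Definition sig (ga x0 y0 : R) (n : pt R) : pt R :=
  (ga * py n, x0 * px n, - (x0 * (ga * py n + y0 * px n))).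

Lemma pencil3 {x0 y0 n1 n2 n3 : R} : in_pencil (x0,y0,1) (n1,n2,n3) ->
  n3 = - (n1 * x0 + n2 * y0).
Proof. by rewrite /in_pencil /dot /px /py /pz /= => -[_ h]; lra. Qed.

Lemma sig_pencil (ga x0 y0 : R) (n : pt R) : ga != 0 -> x0 != 0 -> in_pencil (x0,y0,1) n ->
  in_pencil (x0,y0,1) (sig ga x0 y0 n).
Proof.
case: n => [[n1 n2] n3] gn xn hp; have e := pencil3 hp; case: hp => nz _.
subst n3; split; last by rewrite /sig /dot /px /py /pz /=; ring.
rewrite /sig /nonzero /px /py /pz /= => -[] h1 h2 _.
have n2z : n2 = 0 by apply: (mulfI gn); lra.
have n1z : n1 = 0 by apply: (mulfI xn); lra.
by apply: nz; rewrite n1z n2z; congr (_,_,_); ring.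
Qed.

Lemma sig_cross (ga x0 y0 : R) (n m : pt R) : cross n m = (0,0,0) ->
  cross (sig ga x0 y0 n) (sig ga x0 y0 m) = (0,0,0).
Proof.
case: n => [[n1 n2] n3]; case: m => [[m1 m2] m3].
rewrite /sig /cross /px /py /pz /= => -[_ _ e].
congr (_,_,_).
- transitivity (- (x0^+2 * ga) * (n1 * m2 - n2 * m1)); first by ring.
  by rewrite e mulr0.
- transitivity (- (x0 * ga * y0) * (n1 * m2 - n2 * m1)); first by ring.
  by rewrite e mulr0.
- transitivity (- (x0 * ga) * (n1 * m2 - n2 * m1)); first by ring.
  by rewrite e mulr0.
Qed.

Lemma sig_inv (ga x0 y0 : R) (n : pt R) : in_pencil (x0,y0,1) n ->
  cross (sig ga x0 y0 (sig ga x0 y0 n)) n = (0,0,0).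
Proof.
case: n => [[n1 n2] n3] hp; have e := pencil3 hp; subst n3.
rewrite /sig /cross /px /py /pz /=; congr (_,_,_); ring.
Qed.

Lemma sig_det (ga x0 y0 : R) (n m : pt R) : in_pencil (x0,y0,1) n -> in_pencil (x0,y0,1) m ->
  det3 (sig ga x0 y0 n) (sig ga x0 y0 m) (x0,y0,1) = - (ga * x0) * det3 n m (x0,y0,1).
Proof.
case: n => [[n1 n2] n3] hp; have e := pencil3 hp; subst n3.
case: m => [[m1 m2] m3] hq; have e := pencil3 hq; subst m3.
rewrite /sig /det3 /dot /cross /px /py /pz /=; ring.
Qed.

Lemma sig_cr (ga x0 y0 : R) (n1 n2 n3 n4 : pt R) : ga != 0 -> x0 != 0 ->
  in_pencil (x0,y0,1) n1 -> in_pencil (x0,y0,1) n2 ->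
  in_pencil (x0,y0,1) n3 -> in_pencil (x0,y0,1) n4 ->
  cross_ratio (x0,y0,1) (sig ga x0 y0 n1) (sig ga x0 y0 n2) (sig ga x0 y0 n3) (sig ga x0 y0 n4)
  = cross_ratio (x0,y0,1) n1 n2 n3 n4.
Proof.
move=> gn xn h1 h2 h3 h4; rewrite /cross_ratio !sig_det //.
set k := - (ga * x0).
have kk : k * k != 0 by rewrite mulf_neq0 // oppr_eq0 mulf_neq0.
set d13 := det3 n1 n3 _; set d24 := det3 n2 n4 _; set d14 := det3 n1 n4 _; set d23 := det3 n2 n3 _.
have -> : k * d13 * (k * d24) = (k * k) * (d13 * d24) by ring.
have -> : k * d14 * (k * d23) = (k * k) * (d14 * d23) by ring.
by rewrite invfM mulrACA divff // mul1r.
Qed.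


Lemma Bdot (al be ga x0 y0 P1 P2 P3 S1 S2 S3 : R) : al != 0 -> ga != 0 -> x0 != 0 ->
  y0^+2*x0 - al - be*x0 - ga*x0^+2 = 0 ->
  P2^+2*P1 - al*P3^+3 - be*P1*P3^+2 - ga*P1^+2*P3 = 0 ->
  [\/ [/\ P3 != 0, S3 != 0, P2 * S3 = S2 * P3 & ga * P1 * S1 = al * P3 * S3],
      [/\ P1 = 0, P3 = 0, S2 = 0 & S3 = 0] |
      [/\ P2 = 0, P3 = 0, S1 = 0 & S3 = 0]] ->
  dot (sig ga x0 y0 (cross (x0,y0,1) (P1,P2,P3))) (S1,-S2,S3) = 0.
Proof.
move=> aln gan xn fA fP; rewrite /sig /dot /cross /px /py /pz /=.
case=> [[P3n S3n R1 R2] | [-> -> -> ->] | [-> -> -> ->]]; last 2 first.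
- by ring.
- by ring.
have r1 : P3 * S2 - P2 * S3 = 0 by lra.
have r2 : ga * P1 * S1 - al * P3 * S3 = 0 by lra.
have P1n : P1 != 0.
  apply/eqP => P1z; move: R2; rewrite P1z mulr0 mul0r => /esym/eqP.
  by rewrite !mulf_eq0 (negbTE aln) (negbTE P3n) (negbTE S3n).
have kn : x0 * ga * P1 * P3 != 0 by rewrite !mulf_neq0.
apply: (mulfI kn); rewrite mulr0.
transitivity (x0 * P3 * ga * (P1 - x0 * P3) * (ga * P1 * S1 - al * P3 * S3)
  - x0^+2 * ga * P1 * (y0 * P3 - P2) * (P3 * S2 - P2 * S3)
  + ga * S3 * (- P1 * P3^+2 * x0 * (y0^+2*x0 - al - be*x0 - ga*x0^+2)
               + x0^+2 * (P2^+2*P1 - al*P3^+3 - be*P1*P3^+2 - ga*P1^+2*P3))).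
  by ring.
by rewrite r1 r2 fA fP; ring.
Qed.

Arguments Bdot {al be ga x0 y0 P1 P2 P3 S1 S2 S3}.

Lemma A_nonzero (x0 y0 : R) : nonzero (x0, y0, 1).
Proof. by move=> [] _ _ /eqP; rewrite oner_eq0. Qed.

Lemma main_part (al be ga x0 y0 : R) (P Pb Ab : pt R) : al != 0 -> ga != 0 -> x0 != 0 ->
  y0^+2*x0 - al - be*x0 - ga*x0^+2 = 0 ->
  conj al be ga (x0,y0,1) Ab -> conj al be ga P Pb ->
  ~ peq P (x0,y0,1) -> ~ peq P Ab ->
  peq (sig ga x0 y0 (cross (x0,y0,1) P)) (cross (x0,y0,1) Pb).
Proof.
move=> aln gan xn fA [_ [SA [cA1 cA2]]] [[nzP fP] [S [c1 c2]]] nPA nPAb.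
case: P nzP fP c1 c2 nPA nPAb => [[P1 P2] P3] nzP fP c1 c2 nPA nPAb.
case: S c1 c2 => [[S1 S2] S3] c1 c2.
case: Pb c2 => [[U1 U2] U3] c2.
case: SA cA1 cA2 => [[T1 T2] T3] cA1 cA2.
case: Ab cA2 nPAb => [[V1 V2] V3] cA2 nPAb.
have nzPb : nonzero (U1,U2,U3) by case: c2 => n [_ _ _ h _].
have nzV : nonzero (V1,V2,V3) by case: cA2 => n [_ _ _ h _].
have nzS : nonzero (S1,S2,S3) by case: c1 => n [_ _ _ h _].
have nzNS : nonzero (S1,-S2,S3).
  by move=> [] h1 h2 h3; apply: nzS; congr (_,_,_) => //; lra.
have par := L2 aln c2.
have cases := L1 aln gan c1.
have fP' : P2^+2*P1 - al*P3^+3 - be*P1*P3^+2 - ga*P1^+2*P3 = 0 by move: fP; rewrite /Fabg.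
have hAP : in_pencil (x0,y0,1) (cross (x0,y0,1) (P1,P2,P3)).
  split; last by rewrite /dot /cross /px /py /pz /=; ring.
  move=> h; apply: nPA; split => //; split; first exact: A_nonzero.
  exact: cross_sym.
have [nzs ds] := @sig_pencil ga x0 y0 _ gan xn hAP.
have dB := Bdot aln gan xn fA fP' cases.
have dPb := par_dot par nzNS dB.
split => //; split; last exact: triple_prod.
move=> hAPb.
have hAS := par_trans hAPb par nzPb.
move: hAS; rewrite /cross /px /py /pz /= => -[e1 e2 e3].
case: cases => [[P3n S3n R1 R2] | [_ _ S2z S3z] | [_ _ S1z S3z]]; last 2 first.
- by subst; apply: nzS; congr (_,_,_) => //; lra.
- by subst; apply: nzS; congr (_,_,_) => //; lra.
case: (L1 aln gan cA1) => [[_ T3n RA1 RA2] | [_ h _ _] | [_ h _ _]]; last 2 first.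
- by move: h => /eqP; rewrite oner_eq0.
- by move: h => /eqP; rewrite oner_eq0.
have parA := L2 aln cA2.
have nzNT : nonzero (T1,-T2,T3) by move=> [] _ _ h; move: T3n; rewrite h eqxx.
have hS2 : S2 = - y0 * S3 by lra.
have hS1 : S1 = x0 * S3 by lra.
have hP2 : P2 = - y0 * P3.
  by apply: (mulIf S3n); rewrite /= R1 hS2; ring.
have hP1 : ga * x0 * P1 = al * P3.
  apply: (mulIf S3n); rewrite /=.
  transitivity (ga * P1 * (x0 * S3)); first by ring.
  by rewrite -hS1 R2.
have hT2 : T2 = y0 * T3 by lra.
have hT1 : ga * x0 * T1 = al * T3 by lra.
have gxn : ga * x0 != 0 by rewrite mulf_neq0.
have k2 : P3 * T1 - P1 * T3 = 0.
  apply: (mulfI gxn); rewrite mulr0.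
  transitivity (P3 * (ga * x0 * T1) - (ga * x0 * P1) * T3); first by ring.
  by rewrite hT1 hP1; ring.
have hPT : cross (P1,P2,P3) (T1,-T2,T3) = (0,0,0).
  rewrite /cross /px /py /pz /=; congr (_,_,_).
  - by rewrite hP2 hT2; ring.
  - exact: k2.
  - have -> : P1 * - T2 - P2 * T1 = y0 * (P3 * T1 - P1 * T3) by rewrite hP2 hT2; ring.
    by rewrite k2 mulr0.
apply: nPAb; split => //; split => //.
exact: par_trans hPT (cross_sym parA) nzNT.
Qed.

End Aux.

Theorem lemma8 (R : realType) (a b r0 r1 x0 y0 : R) :
  nonsingular_ab a b ->
  r0 != 0 -> r1 != 0 ->
  on_Gab a b (r0, r1, 1) ->
  on_curve (alpha r0 r1) (beta a r0 r1) (gamma b r0 r1) (x0, y0, 1) ->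
  exists sigma : pt R -> pt R,
    line_involution (x0, y0, 1) sigma /\
    forall P Pb Ab : pt R,
      conj (alpha r0 r1) (beta a r0 r1) (gamma b r0 r1) (x0, y0, 1) Ab ->
      conj (alpha r0 r1) (beta a r0 r1) (gamma b r0 r1) P Pb ->
      ~ peq P (x0, y0, 1) -> ~ peq P Ab ->
      peq (sigma (cross (x0, y0, 1) P)) (cross (x0, y0, 1) Pb).
Proof.
move=> nsing r0n r1n _ [_ fA].
have aln : alpha r0 r1 != 0 by rewrite /alpha mulf_neq0 ?invr_neq0 ?expf_neq0.
have bn : b != 0.
  apply/eqP => bz; apply: (nsing (0,0,1)); first exact: A_nonzero.
  by rewrite /Gab /Gab_X /Gab_Y /Gab_Z bz; split; ring.
have gan : gamma b r0 r1 != 0 by rewrite /gamma !mulf_neq0 ?invr_neq0 ?expf_neq0.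
move: fA; rewrite /Fabg => fA.
have fA' : y0^+2*x0 - alpha r0 r1 - beta a r0 r1*x0 - gamma b r0 r1*x0^+2 = 0.
  by rewrite -fA; ring.
have xn : x0 != 0.
  by apply/eqP => xz; move: fA'; rewrite xz; apply/eqP; rewrite !(mulr0, mul0r, expr0n) /= sub0r !subr0 oppr_eq0.
exists (@sig R (gamma b r0 r1) x0 y0); split.
  split.
  - by move=> n hn; apply: sig_pencil.
  - by move=> n m _ _ h; apply: sig_cross.
  - by move=> n hn; apply: sig_inv.
  - by move=> n1 n2 n3 n4 h1 h2 h3 h4 _ _ _ _ _ _; apply: sig_cr.
by move=> P Pb Ab hA hP nPA nPAb; apply: (@main_part R _ _ _ _ _ _ _ _ aln gan xn fA' hA hP nPA nPAb).
Qed.
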